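(* Let $\iota:B\to A$ be an injective homomorphism of groups. Then $q\mapsto\mathrm{Ker}(q)=\{a\in A:q(a)=1_B\}$ is a bijection from the set of maps $q:A\to B$ satisfying (ZL1), (ZL2), (ZL3) onto the set $\mathcal C_\iota$ of complements to $\iota(B)$ in $A$. The inverse sends a complement $X$ to the map $q_X$ with $q_X(\iota(b)x)=b$ for $b\in B$, $x\in X$.
   Context: For a homomorphism $\iota:B\to A$, conditions on $q:A\to B$: (ZL1) $q(1_A)=1_B$; (ZL2) $q(\iota(b)a)=b\,q(a)$ for all $a\in A,b\in B$; (ZL3) $q(aa')=q(a\,\iota(q(a')))$ for all $a,a'\in A$. These maps constitute $\mathcal Z^1(\mathsf T^l_\iota,(B,m_B))$, the algebra structures on the left $B$-set $B$ for the monad $A\otimes_B-$ induced by $\iota$. A complement to a subgroup $H$ of $A$ is a subgroup $X$ of $A$ with $HX=A$ and $H\cap X=\{1_A\}$ (so every $a\in A$ is uniquely $a=hx$ with $h\in H,x\in X$). *)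

(* Defs.v *)
Record group := Group {
  carrier :> Type;
  gmul : carrier -> carrier -> carrier;
  gone : carrier;
  ginv : carrier -> carrier;
  gmulA : forall x y z, gmul x (gmul y z) = gmul (gmul x y) z;
  gmul1 : forall x, gmul x gone = x;
  g1mul : forall x, gmul gone x = x;
  gmulV : forall x, gmul x (ginv x) = gone;
  gVmul : forall x, gmul (ginv x) x = gone
}.

Arguments gmul {g} _ _.
Arguments gone {g}.
Arguments ginv {g} _.

Definition is_hom (B A : group) (f : B -> A) : Prop :=
  forall x y : B, f (gmul x y) = gmul (f x) (f y).

Definition injective {X Y : Type} (f : X -> Y) : Prop :=
  forall x y, f x = f y -> x = y.

Definition is_subgroup (A : group) (H : A -> Prop) : Prop :=
  H gone /\ (forall x y, H x -> H y -> H (gmul x y)) /\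
  (forall x, H x -> H (ginv x)).

Definition image_set (B A : group) (iota : B -> A) : A -> Prop :=
  fun a => exists b, iota b = a.

Definition is_complement (A : group) (H X : A -> Prop) : Prop :=
  is_subgroup A X /\
  (forall a : A, exists h x, H h /\ X x /\ a = gmul h x) /\
  (forall a : A, H a -> X a -> a = gone).

Definition ZL (B A : group) (iota : B -> A) (q : A -> B) : Prop :=
  q gone = gone /\
  (forall (a : A) (b : B), q (gmul (iota b) a) = gmul b (q a)) /\
  (forall a a' : A, q (gmul a a') = q (gmul a (iota (q a')))).

Definition Ker (B A : group) (q : A -> B) : A -> Prop :=
  fun a => q a = gone.

(* Main.v *)
Require Import Defs.
From Stdlib Require Import ClassicalEpsilon.

Section G.
Variable G : group.
Lemma cl (x y : G) : gmul (ginv x) (gmul x y) = y.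
Proof. rewrite gmulA, gVmul, g1mul; reflexivity. Qed.
Lemma cl' (x y : G) : gmul x (gmul (ginv x) y) = y.
Proof. rewrite gmulA, gmulV, g1mul; reflexivity. Qed.
Lemma lcan (x y z : G) : gmul x y = gmul x z -> y = z.
Proof. intro H. rewrite <- (cl x y), H, cl. reflexivity. Qed.
Lemma inv_unique (x y : G) : gmul x y = gone -> ginv x = y.
Proof. intro H. apply (lcan x). rewrite gmulV, H. reflexivity. Qed.
Lemma inv_mul (x y : G) : ginv (gmul x y) = gmul (ginv y) (ginv x).
Proof. apply inv_unique. rewrite <- gmulA, (gmulA _ y), gmulV, g1mul, gmulV. reflexivity. Qed.
Lemma inv_inv (x : G) : ginv (ginv x) = x.
Proof. apply inv_unique. apply gVmul. Qed.
Lemma inv1 : ginv (@gone G) = gone.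
Proof. apply inv_unique. apply gmul1. Qed.
End G.

Section H.
Variables (A B : group) (iota : B -> A) (hom : is_hom B A iota) (inj : injective iota).
Lemma hom1 : iota gone = gone.
Proof. apply (lcan _ (iota gone)). rewrite <- hom, !gmul1. reflexivity. Qed.
Lemma homV b : iota (ginv b) = ginv (iota b).
Proof. symmetry. apply inv_unique. rewrite <- hom, gmulV. apply hom1. Qed.
End H.

Theorem proposition4p3 (A B : group) (iota : B -> A)
  (hom : is_hom B A iota) (inj : injective iota) :
  (* q |-> Ker q lands in the set of complements to iota(B) *)
  (forall q : A -> B, ZL B A iota q ->
     is_complement A (image_set B A iota) (Ker B A q)) /\
  (* injectivity *)
  (forall q1 q2 : A -> B, ZL B A iota q1 -> ZL B A iota q2 ->
     (forall a, Ker B A q1 a <-> Ker B A q2 a) -> forall a, q1 a = q2 a) /\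
  (* surjectivity, with the inverse X |-> q_X, q_X(iota(b) x) = b *)
  (forall X : A -> Prop, is_complement A (image_set B A iota) X ->
     exists qX : A -> B,
       ZL B A iota qX /\
       (forall a, Ker B A qX a <-> X a) /\
       (forall (b : B) (x : A), X x -> qX (gmul (iota b) x) = b)).
Proof.
  pose proof (hom1 A B iota hom) as H1.
  pose proof (homV A B iota hom) as HV.
  assert (Kdec : forall q, ZL B A iota q -> forall a,
            q (gmul (ginv (iota (q a))) a) = gone).
  { intros q [Z1 [Z2 Z3]] a. rewrite <- HV, Z2, gVmul. reflexivity. }
  split; [|split].
  - intros q Z. pose proof (Kdec q Z) as KD. destruct Z as [Z1 [Z2 Z3]].
    unfold is_complement, is_subgroup, Ker, image_set. split; [split; [|split]|split].
    + exact Z1.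
    + intros x y Hx Hy. rewrite Z3, Hy, H1, gmul1. exact Hx.
    + intros x Hx. pose proof (Z3 (ginv x) x) as E. rewrite gVmul, Hx, H1, gmul1, Z1 in E.
      symmetry; exact E.
    + intro a. exists (iota (q a)), (gmul (ginv (iota (q a))) a).
      split; [eauto|split; [apply KD|]]. rewrite cl'. reflexivity.
    + intros a [b <-] Hq. pose proof (Z2 gone b) as E.
      rewrite gmul1, Z1, gmul1, Hq in E. rewrite <- E. exact H1.
  - intros q1 q2 Z1 Z2 HK a.
    pose proof (Kdec q1 Z1 a) as K. apply HK in K. unfold Ker in K.
    destruct Z2 as [_ [Z2 _]].
    pose proof (Z2 (gmul (ginv (iota (q1 a))) a) (q1 a)) as E.
    rewrite cl', K, gmul1 in E. symmetry; exact E.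
  - intros X [[X1 [Xm Xi]] [Xd Xc]].
    assert (ex : forall a, exists b, X (gmul (ginv (iota b)) a)).
    { intro a. destruct (Xd a) as [h [x [[b <-] [Hx ->]]]]. exists b. rewrite cl. exact Hx. }
    assert (uniq : forall a b b', X (gmul (ginv (iota b)) a) -> X (gmul (ginv (iota b')) a) -> b = b').
    { intros a b b' Hb Hb'. apply inj.
      assert (E : gmul (ginv (iota b)) (iota b') = gone).
      { apply Xc.
        - exists (gmul (ginv b) b'). rewrite hom, HV. reflexivity.
        - pose proof (Xm _ _ Hb (Xi _ Hb')) as P.
          rewrite inv_mul, inv_inv, <- gmulA, cl' in P. exact P. }
      apply (lcan _ (ginv (iota b))). rewrite gVmul, E. reflexivity. }
    exists (fun a => proj1_sig (constructive_indefinite_description _ (ex a))).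
    set (qX := fun a => proj1_sig (constructive_indefinite_description _ (ex a))).
    assert (Sp : forall a, X (gmul (ginv (iota (qX a))) a)).
    { intro a. unfold qX. exact (proj2_sig (constructive_indefinite_description _ (ex a))). }
    assert (Ch : forall a b, X (gmul (ginv (iota b)) a) -> qX a = b).
    { intros a b Hb. exact (uniq a _ _ (Sp a) Hb). }
    fold qX. split; [split; [|split]|split].
    + apply Ch. rewrite H1, inv1, gmul1. exact X1.
    + intros a b. apply Ch. rewrite hom, inv_mul, <- gmulA, cl. apply Sp.
    + intros a a'. apply Ch.
      pose proof (Xm _ _ (Sp (gmul a (iota (qX a')))) (Sp a')) as P.
      rewrite <- !gmulA, cl' in P. exact P.
    + intro a. unfold Ker. split.
      * intro E. pose proof (Sp a) as P. rewrite E, H1, inv1, g1mul in P. exact P.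
      * intro Ha. apply Ch. rewrite H1, inv1, g1mul. exact Ha.
    + intros b x Hx. apply Ch. rewrite cl. exact Hx.
Qed.
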